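(* Let $G$ be a finite group and $H$ a core-free subgroup of $G$ contained in a normal subgroup $N$ of $G$ such that $[N:H]=2$. Then $N$ is an elementary abelian $2$-group.
   Context: A subgroup $H$ of $G$ is core-free if it contains no nontrivial normal subgroup of $G$. *)

(* Defs.v *)
From mathcomp Require Import all_boot all_fingroup all_solvable.
Set Implicit Arguments. Unset Strict Implicit. Unset Printing Implicit Defensive.
Local Open Scope group_scope.

Definition core_free (gT : finGroupType) (H G : {set gT}) : Prop :=
  forall K : {group gT}, K <| G -> K \subset H -> K :=: 1.

(* Main.v *)
Require Import Defs.
From mathcomp Require Import all_boot all_fingroup all_solvable.
Local Open Scope group_scope.

Lemma idx2_facts (gT : finGroupType) (N K : {group gT}) :
  K \subset N -> #|N : K| = 2%N ->
  (forall x, x \in N -> x ^+ 2 \in K) /\ (forall x y, x \in N -> y \in N -> [~ x, y] \in K).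
Proof.
move=> sKN iKN; have nKN := normal_norm (index2_normal sKN iKN).
have cardQ : #|N / K| = 2%N by rewrite card_quotient.
split.
- move=> x Nx; apply: coset_idr; first by rewrite groupX // (subsetP nKN).
  rewrite morphX ?(subsetP nKN) //.
  by rewrite -cardQ expg_cardG // mem_quotient.
- have ab : abelian (N / K) by apply: cyclic_abelian; apply: prime_cyclic; rewrite cardQ.
  have := der1_min nKN ab => sD x y Nx Ny; apply: (subsetP sD).
  by apply: mem_commg.
Qed.

Theorem mainTheorem5 (gT : finGroupType) (G N H : {group gT}) :
  H \subset G -> core_free H G -> N <| G -> H \subset N -> #|N : H| = 2%N ->
  2.-abelem N.
Proof.
move=> sHG cf nNG sHN iNH.
have core1 : gcore H G :=: 1 by apply: cf; [exact: gcore_normal | exact: gcore_sub].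
have facts : forall g, g \in G -> (forall x, x \in N -> x ^+ 2 \in H :^ g) /\
   (forall x y, x \in N -> y \in N -> [~ x, y] \in H :^ g).
  move=> g Gg; apply: idx2_facts.
    by rewrite -(normP (subsetP (normal_norm nNG) g Gg)) conjSg.
  by rewrite -{1}(normP (subsetP (normal_norm nNG) g Gg)) indexJg.
have inC : forall z, (forall g, g \in G -> z \in H :^ g) -> z = 1.
  move=> z Hz; have : z \in gcore H G by apply/bigcapP => g Gg; exact: Hz.
  by rewrite core1 => /set1P.
apply/abelemP => //; split.
  apply/centsP => x Nx y Ny; apply/commgP; apply/eqP; apply: inC => g Gg.
  by case: (facts g Gg) => _ ->.
move=> x Nx; apply: inC => g Gg; by case: (facts g Gg) => ->.
Qed.
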